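(* Let $m\ge1$, $M=2^m$, $N\ge1$, and let bit probabilities $P_{C_0}(0),\ldots,P_{C_{m-1}}(0)\in(0,1)$ be given, with $P_{C_k}(1)=1-P_{C_k}(0)$. Let $\mathbb{X}$ be a matrix with rows $\boldsymbol{x}_0,\ldots,\boldsymbol{x}_{M-1}\in\mathbb{R}^N$ and let $\mathring{\mathbb{X}}$ be its transform, with rows $\mathring{\boldsymbol{x}}_i=\sum_{j=0}^{M-1}\boldsymbol{x}_j\gamma_{i,j}\sqrt{P_j}$. Then for every $j=0,\ldots,M-1$, $$\boldsymbol{x}_j=\frac{1}{M\sqrt{P_j}}\sum_{i=0}^{M-1}\mathring{\boldsymbol{x}}_i\gamma_{i,j}.$$
   Context: For an integer $0\le i\le M-1$, $n_{i,k}\in\{0,1\}$ denotes the $k$-th bit of its base-2 representation ($i=\sum_k n_{i,k}2^k$); $\bar b=1-b$ for a bit $b$. The symbol probabilities are $P_i=\prod_{k=0}^{m-1}P_{C_k}(n_{i,k})$. The coefficients are $$\gamma_{i,j}=\prod_{k=0}^{m-1}\Big[(-1)^{\bar n_{i,k}n_{j,k}}\sqrt{P_{C_k}(0)}+(-1)^{n_{i,k}\bar n_{j,k}}\sqrt{P_{C_k}(1)}\Big].$$ *)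

(* Defs.v *)
From HB Require Import structures.
From mathcomp Require Import all_boot all_order all_algebra.
Set Implicit Arguments. Unset Strict Implicit. Unset Printing Implicit Defensive.
Import Order.TTheory GRing.Theory Num.Theory.
Local Open Scope ring_scope.

Definition bit (i k : nat) : bool := odd (i %/ 2 ^ k).

Section Defs.
Variables (R : rcfType) (m : nat) (p0 : 'I_m -> R).

Definition PC (k : 'I_m) (b : bool) : R := if b then 1 - p0 k else p0 k.

Definition Psym (i : nat) : R := \prod_(k < m) PC k (bit i k).

Definition gamma (i j : nat) : R :=
  \prod_(k < m)
    ((-1) ^+ (~~ bit i k && bit j k) * Num.sqrt (PC k false)
     + (-1) ^+ (bit i k && ~~ bit j k) * Num.sqrt (PC k true)).

Definition transform (N : nat) (X : 'M[R]_(2 ^ m, N)) : 'M[R]_(2 ^ m, N) :=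
  \matrix_(i < 2 ^ m, l < N) \sum_(j < 2 ^ m) X j l * gamma i j * Num.sqrt (Psym j).
End Defs.

(* Main.v *)
Require Import Defs.
From HB Require Import structures.
From mathcomp Require Import all_boot all_order all_algebra.
From mathcomp Require Import ring.
Import Order.TTheory GRing.Theory Num.Theory.
Local Open Scope ring_scope.

Lemma bit_inj (m i i' : nat) : (i < 2 ^ m)%N -> (i' < 2 ^ m)%N ->
  (forall k, (k < m)%N -> bit i k = bit i' k) -> i = i'.
Proof.
elim: m i i' => [|m IH] i i'.
  by rewrite expn0 !ltnS !leqn0 => /eqP-> /eqP->.
move=> hi hi' hb.
have e0 := hb 0%N (ltn0Sn _); rewrite /bit !expn0 !divn1 in e0.
have h2 : i./2 = i'./2.
  apply: IH.
  - by rewrite -divn2 ltn_divLR // -expnSr.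
  - by rewrite -divn2 ltn_divLR // -expnSr.
  move=> k hk; have := hb k.+1 hk; rewrite /bit -!divn2 -!divnMA.
  by rewrite expnS mulnC.
by rewrite -[i]odd_double_half -[i']odd_double_half e0 h2.
Qed.

Section S.
Variables (R : rcfType) (m : nat) (p0 : 'I_m -> R).
Hypothesis hp : forall k : 'I_m, 0 < p0 k < 1.

Definition fk (k : 'I_m) (a b : bool) : R :=
  (-1) ^+ (~~ a && b) * Num.sqrt (PC p0 k false)
     + (-1) ^+ (a && ~~ b) * Num.sqrt (PC p0 k true).

Lemma fk_sum k b b' : \sum_(a : bool) fk k a b * fk k a b' =
  if b == b' then 2 else 0.
Proof.
have [h1 h2] := andP (hp k).
have e0 : Num.sqrt (p0 k) ^+ 2 = p0 k by rewrite sqr_sqrtr // ltW.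
have e1 : Num.sqrt (1 - p0 k) ^+ 2 = 1 - p0 k by rewrite sqr_sqrtr // subr_ge0 ltW.
rewrite /fk /PC big_bool /=.
move: e0 e1; set s0 := Num.sqrt (p0 k); set s1 := Num.sqrt (1 - p0 k) => e0 e1.
case: b; case: b' => /=; rewrite ?expr0 ?expr1 ?mulN1r ?mul1r.
- have -> : 2 = 2 * (s0 ^+ 2 + s1 ^+ 2) :> R by rewrite e0 e1 subrKC mulr1.
  ring.
- ring.
- ring.
- have -> : 2 = 2 * (s0 ^+ 2 + s1 ^+ 2) :> R by rewrite e0 e1 subrKC mulr1.
  ring.
Qed.

Definition enc (i : 'I_(2 ^ m)) : {ffun 'I_m -> bool} := [ffun k : 'I_m => bit i k].

Lemma enc_bij : bijective enc.
Proof.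
apply: inj_card_bij.
  move=> i i' /ffunP h; apply: val_inj; apply: (@bit_inj m); rewrite ?ltn_ord // => k hk.
  by have := h (Ordinal hk); rewrite !ffunE.
by rewrite card_ffun card_bool !card_ord.
Qed.

Lemma orth (j j' : 'I_(2 ^ m)) :
  \sum_(i < 2 ^ m) gamma p0 i j * gamma p0 i j' = if j == j' then (2 ^ m)%:R else 0.
Proof.
transitivity (\sum_(i < 2 ^ m) \prod_(k < m) (fk k (enc i k) (bit j k) * fk k (enc i k) (bit j' k))).
  by apply: eq_bigr => i _; rewrite /gamma -big_split /=; apply: eq_bigr => k _; rewrite ffunE.
rewrite -(@reindex _ _ _ _ _ enc predT (fun f : {ffun 'I_m -> bool} => \prod_(k < m) (fk k (f k) (bit j k) * fk k (f k) (bit j' k)))); last first.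
  by case: enc_bij => g h1 h2; exists g => x _; [apply: h1|apply: h2].
rewrite -(bigA_distr_bigA (fun k a => fk k a (bit j k) * fk k a (bit j' k))) /=.
under eq_bigr => k _ do rewrite fk_sum.
case: eqP => [->|hne].
  under eq_bigr => k _ do rewrite eqxx.
  by rewrite prodr_const card_ord natrX.
have [k hk] : exists k : 'I_m, bit j k != bit j' k.
  apply/existsP; apply: contraT; rewrite negb_exists => /forallP hall.
  exfalso; apply: hne; apply: val_inj; apply: (@bit_inj m); rewrite ?ltn_ord // => k hk.
  by have := hall (Ordinal hk); rewrite negbK => /eqP.
by rewrite (bigD1 k) //= (negbTE hk) mul0r.
Qed.
End S.

Theorem theorem1 (R : rcfType) (m N : nat) (p0 : 'I_m -> R)
    (hm : (1 <= m)%N) (hN : (1 <= N)%N)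
    (hp : forall k : 'I_m, 0 < p0 k < 1)
    (X : 'M[R]_(2 ^ m, N)) (j : 'I_(2 ^ m)) :
  row j X =
    ((2 ^ m)%:R * Num.sqrt (Psym p0 j))^-1 *:
      \sum_(i < 2 ^ m) gamma p0 i j *: row i (transform p0 X).
Proof.
apply/rowP => l; rewrite !mxE summxE.
under eq_bigr => i _ do rewrite !mxE.
under eq_bigr => i _ do rewrite big_distrr /=.
rewrite exchange_big /=.
rewrite (eq_bigr (fun j' : 'I_(2 ^ m) => X j' l * Num.sqrt (Psym p0 j') * (if j == j' then (2 ^ m)%:R else 0))); last first.
  move=> j' _; rewrite -(@orth _ _ _ hp) big_distrr /=; apply: eq_bigr => i _; ring.
rewrite (bigD1 j) //= eqxx big1 ?addr0; last by move=> j' /negbTE; rewrite eq_sym => ->; rewrite mulr0.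
have hP : 0 < Psym p0 j.
  apply: prodr_gt0 => k _; rewrite /PC; have [h1 h2] := andP (hp k).
  by case: bit; rewrite ?subr_gt0.
have hs : Num.sqrt (Psym p0 j) != 0 by rewrite sqrtr_eq0 -ltNge.
have h2 : (2 ^ m)%:R != 0 :> R by rewrite pnatr_eq0 expn_eq0.
by field; rewrite hs h2.
Qed.
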